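(* Let $\chi$ and $\tau$ be fixed positive integers. For each $n$ let $G$ be an $n$-vertex graph and $\Sigma\subseteq V(G)$ with $|\Sigma|=n-o(n)$, such that for every pair of vertices $u,v\in\Sigma$ there is a $(u,v)$-path $u=u_0,u_1,\dots,u_{l-1},u_l=v$ with $l\le\chi$ and $\min\{\deg(u_i),\deg(u_{i+1})\}\le\tau$ for every $0\le i\le l-1$. If a uniformly random vertex of $G$ knows a rumor, then with probability $1-o(1)$ after $6\tau(\chi+\log n)$ rounds of the Push-Pull protocol at least $n-o(n)$ vertices know the rumor.
   Context: Push-Pull protocol: in synchronous rounds, every informed vertex contacts a uniformly random neighbor and sends it the rumor, and every uninformed vertex contacts a uniformly random neighbor and receives the rumor if that neighbor knows it; all random choices are independent, and a vertex informed in a round cannot forward the rumor in that same round. *)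

(* Defs.v *)
From HB Require Import structures.
From mathcomp Require Import all_boot all_order all_algebra.
From mathcomp Require Import all_classical all_reals all_analysis.
Set Implicit Arguments. Unset Strict Implicit. Unset Printing Implicit Defensive.
Import Order.TTheory GRing.Theory Num.Theory.
Local Open Scope ring_scope.

Section PushPull.
Variable R : realType.
Variable n : nat.
Variable e : rel 'I_n.

Definition deg (v : 'I_n) : nat := #|[set w | e v w]|.

Definition low_edge (tau : nat) : rel 'I_n :=
  fun a b => e a b && (minn (deg a) (deg b) <= tau)%N.

(* probability that in one round every vertex v contacts c v:
   each non-isolated vertex picks a uniformly random neighbour,
   independently; an isolated vertex contacts nobody (encoded c v = v). *)
Definition choice_weight (c : {ffun 'I_n -> 'I_n}) : R :=
  \prod_(v : 'I_n)
    (if deg v == 0%N then (c v == v)%:R else (e v (c v))%:R / (deg v)%:R).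

(* informed set after one round, given informed set S and contacts c:
   informed vertices push to their contact, uninformed vertices pull
   from their contact if it was informed at the start of the round. *)
Definition pp_step (S : {set 'I_n}) (c : {ffun 'I_n -> 'I_n}) : {set 'I_n} :=
  S :|: [set w | [exists v in S, c v == w]] :|: [set w | c w \in S].

Definition pp_trans (S S' : {set 'I_n}) : R :=
  \sum_(c : {ffun 'I_n -> 'I_n}) choice_weight c * (pp_step S c == S')%:R.

Definition pp_init : {ffun {set 'I_n} -> R} :=
  [ffun S => \sum_(v : 'I_n) (S == [set v])%:R / n%:R].

Fixpoint pp_dist (t : nat) : {ffun {set 'I_n} -> R} :=
  match t with
  | 0 => pp_init
  | t'.+1 => [ffun S' => \sum_(S : {set 'I_n}) pp_dist t' S * pp_trans S S']
  end.

Definition pp_prob (t : nat) (A : pred {set 'I_n}) : R :=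
  \sum_(S : {set 'I_n} | A S) pp_dist t S.

End PushPull.

(* Main.v *)
Require Import Defs.
From HB Require Import structures.
From mathcomp Require Import all_boot all_order all_algebra.
From mathcomp Require Import all_classical all_reals all_analysis.
From mathcomp Require Import ring lra zify.
Set Implicit Arguments. Unset Strict Implicit. Unset Printing Implicit Defensive.
Import Order.TTheory GRing.Theory Num.Theory.
Import numFieldNormedType.Exports.

Local Open Scope ring_scope.

Lemma seq_bound (R : realType) (E Q : nat -> R) p : 0 <= p -> (forall t, 0 <= E t) ->
  (forall t, E t.+1 <= E t - p * Q t) -> (forall t, Q t.+1 <= Q t) ->
  forall t, t%:R * p * Q t <= E 0.
Proof.
move=> p0 E0 HE HQ.
suff H : forall t, E t + t%:R * p * Q t <= E 0.
  by move=> t; have := H t; have := E0 t; lra.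
elim=> [|t IH]; first by rewrite mul0r mul0r addr0.
have h : t.+1%:R * p * Q t.+1 <= t.+1%:R * p * Q t.
  by apply: ler_wpM2l => //; apply: mulr_ge0.
have := HE t; move: h IH; rewrite -natr1; lra.
Qed.

Section Comb.
Variable R : realType.
Variable n : nat.
Variable e : rel 'I_n.
Hypothesis esym : symmetric e.

Definition om (x y : 'I_n) : R :=
  if deg e x == 0%N then (y == x)%:R else (e x y)%:R / (deg e x)%:R.

Lemma om_ge0 x y : 0 <= om x y.
Proof. rewrite /om; case: ifP => _; first exact: ler0n.
by apply: divr_ge0; apply: ler0n. Qed.

Lemma sum_e x : \sum_y ((e x y)%:R : R) = (deg e x)%:R.
Proof.
rewrite /deg -sum1_card natr_sum [RHS]big_mkcond /=; apply: eq_bigr => y _.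
by rewrite inE; case: (e x y).
Qed.

Lemma sum_om x : \sum_y om x y = 1.
Proof.
rewrite /om; case d0: (deg e x == 0%N).
  rewrite (bigD1 x) //= eqxx big1; first by rewrite addr0.
  by move=> y /negbTE ->.
rewrite -mulr_suml sum_e divff //.
by rewrite pnatr_eq0 d0.
Qed.

Lemma cw_prod c : choice_weight R e c = \prod_v om v (c v).
Proof. by []. Qed.

Lemma sum_prod (F : 'I_n -> 'I_n -> R) :
  \sum_(c : {ffun 'I_n -> 'I_n}) \prod_v F v (c v) = \prod_v \sum_y F v y.
Proof. by rewrite bigA_distr_bigA. Qed.

Lemma cw_ge0 c : 0 <= choice_weight R e c.
Proof. by rewrite cw_prod; apply: prodr_ge0 => v _; apply: om_ge0. Qed.

Lemma sum_cw : \sum_c choice_weight R e c = 1.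
Proof.
under eq_bigr do rewrite cw_prod.
by rewrite sum_prod big1 // => v _; rewrite sum_om.
Qed.

Lemma marg x y : \sum_c choice_weight R e c * (c x == y)%:R = om x y.
Proof.
pose F v j := om v j * (if v == x then (j == y)%:R else 1).
transitivity (\sum_(c : {ffun 'I_n -> 'I_n}) \prod_v F v (c v)).
  apply: eq_bigr => c _; rewrite cw_prod /F big_split /=; congr (_ * _).
  rewrite (bigD1 x) //= ifT //. rewrite big1 ?mulr1 // => v /negbTE ->; by [].
rewrite sum_prod (bigD1 x) //= [X in _ * X]big1 ?mulr1; last first.
  by move=> v /negbTE vx; rewrite /F vx; under eq_bigr do rewrite mulr1; apply: sum_om.
rewrite /F /= (bigD1 y) //= !eqxx mulr1 big1 ?addr0 // => j /negbTE ->.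
by rewrite mulr0.
Qed.

Lemma trans_exp S (F : {set 'I_n} -> R) :
  \sum_S' pp_trans R e S S' * F S' = \sum_c choice_weight R e c * F (pp_step S c).
Proof.
under eq_bigr do rewrite /pp_trans mulr_suml.
rewrite exchange_big /=; apply: eq_bigr => c _.
rewrite (bigD1 (pp_step S c)) //= eqxx mulr1 big1 ?addr0 // => S' /negbTE.
by rewrite eq_sym => ->; rewrite mulr0 mul0r.
Qed.

Lemma trans_ge0 S S' : 0 <= pp_trans R e S S'.
Proof.
by apply: sumr_ge0 => c _; apply: mulr_ge0; [apply: cw_ge0 | apply: ler0n].
Qed.

Lemma trans_sum1 S : \sum_S' pp_trans R e S S' = 1.
Proof.
have := trans_exp S (fun _ => 1); under eq_bigr do rewrite mulr1.
by move=> ->; under eq_bigr do rewrite mulr1; apply: sum_cw.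
Qed.

Lemma step_sub (S : {set 'I_n}) c : S \subset pp_step S c.
Proof. by apply/fintype.subsetP => x xS; rewrite /pp_step !inE xS. Qed.


Variable tau : nat.
Hypothesis tau_gt0 : (0 < tau)%N.

Lemma deg_gt0 a b : e a b -> (0 < deg e a)%N.
Proof. by move=> eab; apply/card_gt0P; exists b; rewrite inE. Qed.

Lemma inv_deg a : (0 < deg e a)%N -> (deg e a <= tau)%N ->
  (tau%:R : R)^-1 <= (deg e a)%:R^-1.
Proof.
move=> d0 dt; rewrite lef_pV2 ?posrE ?ltr0n // ?ler_nat //.
Qed.

Lemma om_edge a b : e a b -> om a b = (deg e a)%:R^-1.
Proof.
move=> eab; rewrite /om; have := deg_gt0 eab; rewrite lt0n => /negbTE ->.
by rewrite eab mul1r.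
Qed.

Lemma step_prob (S : {set 'I_n}) a b : a \in S -> low_edge e tau a b ->
  (tau%:R : R)^-1 <= \sum_c choice_weight R e c * (b \in pp_step S c)%:R.
Proof.
move=> aS /andP [eab]; rewrite geq_min => /orP [da|db].
  apply: (le_trans (inv_deg (deg_gt0 eab) da)).
  rewrite -(om_edge eab) -marg; apply: ler_sum => c _.
  apply: ler_wpM2l; first exact: cw_ge0.
  case: eqP => // <-; rewrite ler_nat /pp_step !inE.
  by rewrite (_ : [exists v in S, c v == c a]) ?orbT //; apply/existsP; exists a; rewrite aS eqxx.
have eba : e b a by rewrite esym.
apply: (le_trans (inv_deg (deg_gt0 eba) db)).
rewrite -(om_edge eba) -marg; apply: ler_sum => c _.
apply: ler_wpM2l; first exact: cw_ge0.
by case: eqP => // cb; rewrite ler_nat /pp_step !inE cb aS ?orbT.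
Qed.

Variables (u : 'I_n) (s : seq 'I_n).

Definition node i := nth u (u :: s) i.
Definition idx (S : {set 'I_n}) : nat := \max_(i < (size s).+1 | node i \in S) i.
Definition D S := (size s - idx S)%N.

Lemma idx_le S : (idx S <= size s)%N.
Proof. by apply/bigmax_leqP => i _; rewrite -ltnS. Qed.

Lemma idx_mono (S S' : {set 'I_n}) : S \subset S' -> (idx S <= idx S')%N.
Proof.
move=> sub; apply/bigmax_leqP => i Pi; apply: leq_bigmax_cond.
exact: (fintype.subsetP sub).
Qed.

Lemma idx_in (S : {set 'I_n}) : u \in S -> node (idx S) \in S.
Proof.
move=> uS.
have [|i0 Pi0 Hm] := @eq_bigmax_cond _ [pred i : 'I_(size s).+1 | node i \in S] (fun i => nat_of_ord i).
  by apply/card_gt0P; exists ord0; rewrite inE.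
by rewrite /idx; move: Hm => /= ->; rewrite inE in Pi0.
Qed.

Lemma D_anti (S S' : {set 'I_n}) : S \subset S' -> (D S' <= D S)%N.
Proof. by move=> sub; rewrite /D leq_sub2l // idx_mono. Qed.

Lemma D_le S : (D S <= size s)%N.
Proof. exact: leq_subr. Qed.

Lemma D0_in (S : {set 'I_n}) : u \in S -> D S = 0%N -> last u s \in S.
Proof.
move=> uS /eqP; rewrite /D subn_eq0 => h.
have e1 : idx S = size s by apply/eqP; rewrite eqn_leq idx_le h.
have -> : last u s = node (size s).
  by rewrite /node (_ : size s = (size (u :: s)).-1) // nth_last.
by rewrite -e1 idx_in.
Qed.


Lemma path_low i : path (low_edge e tau) u s -> (i < size s)%N ->
  low_edge e tau (node i) (node i.+1).
Proof. by move=> /(pathP u) H /H. Qed.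

Lemma step_D (S : {set 'I_n}) c : u \in S -> (0 < D S)%N ->
  node (idx S).+1 \in pp_step S c -> ((D (pp_step S c)).+1 <= D S)%N.
Proof.
move=> uS Dp hin.
have lt : (idx S < size s)%N by rewrite -subn_gt0.
have h1 : ((idx S).+1 <= idx (pp_step S c))%N.
  exact: (@leq_bigmax_cond _ [pred i : 'I_(size s).+1 | node i \in pp_step S c]
     (fun i => nat_of_ord i) (Ordinal (lt : ((idx S).+1 < (size s).+1)%N)) hin).
have h2 := idx_le (pp_step S c).
rewrite /D; lia.
Qed.

Lemma L2 (S : {set 'I_n}) : u \in S -> path (low_edge e tau) u s ->
  \sum_c choice_weight R e c * (D (pp_step S c))%:R
    <= (D S)%:R - (tau%:R : R)^-1 * (0 < D S)%N%:R.
Proof.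
move=> uS hp; case: (posnP (D S)) => [D0|Dp].
  rewrite D0 /= mulr0 subr0 big1 // => c _.
  have := D_anti (step_sub S c); rewrite D0 leqn0 => /eqP ->; by rewrite mulr0.
rewrite /= mulr1n mulr1.
have lt : (idx S < size s)%N by rewrite -subn_gt0.
set b := node (idx S).+1.
have hb := step_prob (idx_in uS) (path_low hp lt) (S := S).
apply: (@le_trans _ _ (\sum_c choice_weight R e c * ((D S)%:R - (b \in pp_step S c)%:R))).
  apply: ler_sum => c _; apply: ler_wpM2l; first exact: cw_ge0.
  case hbin: (b \in pp_step S c).
    have := step_D uS Dp hbin; rewrite -(ler_nat R) -natr1 /=; lra.
  by rewrite subr0 ler_nat D_anti // step_sub.
under eq_bigr do rewrite mulrBr.
rewrite sumrB -mulr_suml sum_cw mul1r; lra.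
Qed.

Lemma L3 (S : {set 'I_n}) :
  \sum_c choice_weight R e c * (0 < D (pp_step S c))%N%:R <= ((0 < D S)%N%:R : R).
Proof.
have -> : ((0 < D S)%N%:R : R) = \sum_c choice_weight R e c * (0 < D S)%N%:R.
  by rewrite -mulr_suml sum_cw mul1r.
apply: ler_sum => c _.
apply: ler_wpM2l; first exact: cw_ge0.
rewrite ler_nat; case: (posnP (D (pp_step S c))) => [//|p].
by rewrite (leq_trans p (D_anti (step_sub S c))).
Qed.


Fixpoint chain (mu : {ffun {set 'I_n} -> R}) t : {ffun {set 'I_n} -> R} :=
  if t is t'.+1 then [ffun S' => \sum_S chain mu t' S * pp_trans R e S S'] else mu.

Lemma chain_ge0 (mu : {ffun {set 'I_n} -> R}) : (forall S, 0 <= mu S) -> forall t S, 0 <= chain mu t S.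
Proof.
move=> h; elim => //= t IH S; rewrite ffunE; apply: sumr_ge0 => S0 _.
by apply: mulr_ge0 => //; apply: trans_ge0.
Qed.

Lemma chain_mass (mu : {ffun {set 'I_n} -> R}) t : \sum_S chain mu t S = \sum_S mu S.
Proof.
elim: t => //= t IH; under eq_bigr do rewrite ffunE.
rewrite exchange_big /= -IH; apply: eq_bigr => S _.
by rewrite -mulr_sumr trans_sum1 mulr1.
Qed.

Lemma chain_supp (mu : {ffun {set 'I_n} -> R}) : (forall S : {set 'I_n}, u \notin S -> mu S = 0) ->
  forall t (S : {set 'I_n}), u \notin S -> chain mu t S = 0.
Proof.
move=> h; elim => //= t IH S' uS'; rewrite ffunE big1 // => S _.
case uS: (u \in S); last by rewrite IH ?uS // mul0r.
rewrite /pp_trans big1 ?mulr0 // => c _.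
have : pp_step S c != S'.
  apply/eqP => hh; move: uS'; rewrite -hh.
  by rewrite (fintype.subsetP (step_sub S c)).
by move/negbTE => ->; rewrite mulr0.
Qed.

Lemma chain_exp (mu : {ffun {set 'I_n} -> R}) t (F : {set 'I_n} -> R) :
  \sum_S' chain mu t.+1 S' * F S' =
  \sum_S chain mu t S * \sum_S' pp_trans R e S S' * F S'.
Proof.
rewrite /=; under eq_bigr do rewrite ffunE mulr_suml.
rewrite exchange_big; apply: eq_bigr => S _; rewrite mulr_sumr.
by apply: eq_bigr => S' _; rewrite mulrA.
Qed.

Definition delta := [ffun S : {set 'I_n} => ((S == [set u])%:R : R)].

Lemma sum_delta : \sum_S delta S = 1.
Proof.
rewrite (bigD1 [set u]) //= ffunE eqxx big1 ?addr0 // => S /negbTE hS.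
by rewrite ffunE hS.
Qed.

Lemma key t : path (low_edge e tau) u s ->
  t%:R * (tau%:R : R)^-1 * \sum_S chain delta t S * (last u s \notin S)%:R
    <= (size s)%:R.
Proof.
move=> hp.
have d0 : forall S, 0 <= delta S by move=> S; rewrite ffunE ler0n.
have dsupp : forall S : {set 'I_n}, u \notin S -> delta S = 0.
  by move=> S uS; rewrite ffunE; case: eqP => // h; move: uS; rewrite h set11.
pose E t := \sum_S chain delta t S * (D S)%:R.
pose Q t := \sum_S chain delta t S * (0 < D S)%N%:R.
have p0 : 0 <= (tau%:R : R)^-1 by rewrite invr_ge0 ler0n.
have ch0 := chain_ge0 d0.
have chs := chain_supp dsupp.
have := @seq_bound R E Q (tau%:R^-1) p0 _ _ _ t.
have E0 : E 0%N <= (size s)%:R.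
  have -> : ((size s)%:R : R) = \sum_S delta S * (size s)%:R.
    by rewrite -mulr_suml sum_delta mul1r.
  by apply: ler_sum => S _; apply: ler_wpM2l => //; rewrite ler_nat D_le.
have QB : \sum_S chain delta t S * (last u s \notin S)%:R <= Q t.
  apply: ler_sum => S _; case uS: (u \in S); last by rewrite chs ?uS // !mul0r.
  apply: ler_wpM2l => //; rewrite ler_nat.
  case: (posnP (D S)) => [D0|_]; last by rewrite leq_b1.
  by rewrite (D0_in uS D0).
have hQ : forall k, Q k.+1 <= Q k.
  move=> k; rewrite /Q chain_exp; apply: ler_sum => S _.
  by apply: ler_wpM2l => //; rewrite trans_exp; apply: L3.
have hE : forall k, E k.+1 <= E k - tau%:R^-1 * Q k.
  move=> k; rewrite /E /Q chain_exp mulr_sumr -sumrB; apply: ler_sum => S _.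
  rewrite mulrCA -mulrBr.
  case uS: (u \in S); last by rewrite chs ?uS // !mul0r.
  by apply: ler_wpM2l => //; rewrite trans_exp; apply: L2.
have hE0 : forall k, 0 <= E k.
  by move=> k; apply: sumr_ge0 => S _; apply: mulr_ge0.
move=> H; have {}H := H hE0 hE hQ.
apply: (le_trans _ E0); apply: (le_trans _ H).
by apply: ler_wpM2l => //; apply: mulr_ge0.
Qed.

End Comb.

Section Final.
Variable R : realType.
Variable n : nat.
Variable e : rel 'I_n.
Hypothesis esym : symmetric e.

Lemma pp_dist_dec t S :
  pp_dist R e t S = (n%:R)^-1 * \sum_u chain e (delta R u) t S.
Proof.
elim: t S => [|t IH] S.
  by rewrite /= ffunE mulr_sumr; apply: eq_bigr => v _; rewrite ffunE mulrC.
rewrite /= ffunE; under eq_bigr do rewrite IH -mulrA mulr_suml.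
rewrite -mulr_sumr exchange_big /=; congr (_ * _); apply: eq_bigr => u _.
by rewrite ffunE.
Qed.

Lemma delta_ge0 (u : 'I_n) S : 0 <= delta R u S.
Proof. by rewrite ffunE ler0n. Qed.

Lemma pp_ge0 t S : 0 <= pp_dist R e t S.
Proof.
rewrite pp_dist_dec; apply: mulr_ge0; first by rewrite invr_ge0 ler0n.
by apply: sumr_ge0 => u _; apply: chain_ge0 => //; apply: delta_ge0.
Qed.

Lemma pp_mass t : (0 < n)%N -> \sum_S pp_dist R e t S = 1.
Proof.
move=> n0; under eq_bigr do rewrite pp_dist_dec.
rewrite -mulr_sumr exchange_big /=.
under eq_bigr do rewrite chain_mass sum_delta.
by rewrite sumr_const card_ord mulVf // pnatr_eq0 -lt0n.
Qed.

Lemma card_compl (S : {set 'I_n}) :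
  ((n - #|S|)%N%:R : R) = \sum_v (v \notin S)%:R.
Proof.
have -> : (n - #|S| = #|~: S|)%N by rewrite -[n in (n - _)%N]card_ord -(cardsC S) addKn.
rewrite -sum1_card natr_sum [LHS]big_mkcond /=.
by apply: eq_bigr => v _; rewrite !inE; case: (v \in S).
Qed.


Variables (chi tau : nat) (Sigma : {set 'I_n}).
Hypothesis tau_gt0 : (0 < tau)%N.
Hypothesis hpath : forall u v : 'I_n, u \in Sigma -> v \in Sigma ->
  exists s : seq 'I_n,
    [/\ path (low_edge e tau) u s, last u s = v & (size s <= chi)%N].

Lemma Pu_bound T (u v : 'I_n) : (0 < T)%N ->
  \sum_S chain e (delta R u) T S * (v \notin S)%:R <=
  chi%:R * tau%:R / T%:R + (u \notin Sigma)%:R + (v \notin Sigma)%:R.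
Proof.
move=> T0.
have K0 : 0 <= chi%:R * tau%:R / T%:R :> R by rewrite divr_ge0 // mulr_ge0.
have ch0 : forall S, 0 <= chain e (delta R u) T S.
  by move=> S; apply: chain_ge0 => //; apply: delta_ge0.
set P := \sum_S _.
have HP : 0 <= P by apply: sumr_ge0 => S _; apply: mulr_ge0.
have le1 : P <= 1.
  have -> : (1 : R) = \sum_S chain e (delta R u) T S by rewrite chain_mass sum_delta.
  apply: ler_sum => S _; have := ch0 S.
  have : ((v \notin S)%:R : R) <= 1 by rewrite lern1 leq_b1.
  nra.
have a0 : 0 <= ((u \notin Sigma)%:R : R) by apply: ler0n.
have b0 : 0 <= ((v \notin Sigma)%:R : R) by apply: ler0n.
case uS: (u \in Sigma); last by move: a0; rewrite /= mulr1n; lra.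
case vS: (v \in Sigma); last by move: b0; rewrite /= mulr1n; lra.
rewrite /= !mulr0n !addr0.
have [s [hp hl hs]] := hpath uS vS.
have := key R esym tau_gt0 T hp; rewrite hl -/P => H.
have hsz : (size s)%:R <= chi%:R :> R by rewrite ler_nat.
have Tn0 : (T%:R : R) != 0 by rewrite pnatr_eq0 -lt0n.
have tn0 : (tau%:R : R) != 0 by rewrite pnatr_eq0 -lt0n.
clearbody P.
have -> : P = (T%:R * tau%:R^-1 * P) * (tau%:R / T%:R) by field; rewrite ?Tn0 ?tn0.
rewrite -[chi%:R * _ / _]mulrA; apply: ler_wpM2r; first by rewrite divr_ge0.
exact: le_trans hsz.
Qed.


Lemma EU_bound T : (0 < n)%N -> (0 < T)%N ->
  \sum_S pp_dist R e T S * (n - #|S|)%N%:R <=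
  n%:R * (chi%:R * tau%:R / T%:R) + 2 * (n - #|Sigma|)%N%:R.
Proof.
move=> n0 T0.
set K := chi%:R * tau%:R / T%:R.
set m := ((n - #|Sigma|)%N%:R : R).
have nn0 : (n%:R : R) != 0 by rewrite pnatr_eq0 -lt0n.
under eq_bigr do rewrite card_compl mulr_sumr.
rewrite exchange_big /=.
have step1 : forall v : 'I_n, \sum_S pp_dist R e T S * (v \notin S)%:R =
   n%:R^-1 * \sum_u \sum_S chain e (delta R u) T S * (v \notin S)%:R.
  move=> v; under eq_bigr do rewrite pp_dist_dec -mulrA mulr_suml.
  by rewrite -mulr_sumr exchange_big.
under eq_bigr do rewrite step1.
apply: (@le_trans _ _ (\sum_(v : 'I_n) n%:R^-1 * (K *+ n + m + ((v \notin Sigma)%:R) *+ n))).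
  apply: ler_sum => v _; apply: ler_wpM2l; first by rewrite invr_ge0 ler0n.
  apply: (@le_trans _ _ (\sum_(u : 'I_n) (K + (u \notin Sigma)%:R + (v \notin Sigma)%:R))).
    by apply: ler_sum => u _; apply: Pu_bound.
  rewrite big_split big_split /= !sumr_const card_ord /m card_compl.
  exact: lexx.
rewrite -mulr_sumr big_split /= sumr_const card_ord sumrMnl -card_compl -/m.
clearbody K m; rewrite -mulrnDl -(mulr_natr (K *+ n + m + m) n) mulrC mulfK // -(mulr_natl K n); lra.
Qed.


Lemma prob_good T g : (0 < n)%N ->
  1 - (\sum_S pp_dist R e T S * (n - #|S|)%N%:R) / (g.+1)%:R
    <= pp_prob R e T (fun S => (n - g <= #|S|)%N) <= 1.
Proof.
move=> n0.
have tot : \sum_(S : {set 'I_n} | (n - g <= #|S|)%N) pp_dist R e T S +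
    \sum_(S : {set 'I_n} | ~~ (n - g <= #|S|)%N) pp_dist R e T S = 1.
  by rewrite -(pp_mass T n0) [RHS](bigID (fun S : {set 'I_n} => (n - g <= #|S|)%N)) /=.
rewrite /pp_prob /=.
set G := \sum_(S | _) _ in tot *.
set B := \sum_(S | ~~ _) _ in tot.
have B0 : 0 <= B by apply: sumr_ge0 => S _; apply: pp_ge0.
have HB : B * (g.+1)%:R <= \sum_S pp_dist R e T S * (n - #|S|)%N%:R.
  rewrite /B mulr_suml.
  apply: (@le_trans _ _ (\sum_(S : {set 'I_n} | ~~ (n - g <= #|S|)%N) pp_dist R e T S * (n - #|S|)%N%:R)).
    apply: ler_sum => S hS; apply: ler_wpM2l; first exact: pp_ge0.
    rewrite ler_nat; move: hS; rewrite -ltnNge => hS.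
    by rewrite ltn_subRL addnC -ltn_subRL.
  rewrite [X in _ <= X](bigID (fun S : {set 'I_n} => (n - g <= #|S|)%N)) /= lerDr.
  by apply: sumr_ge0 => S _; apply: mulr_ge0; [apply: pp_ge0 | apply: ler0n].
have gp : 0 < (g.+1)%:R :> R by rewrite ltr0n.
rewrite -ler_pdivlMr // in HB.
clearbody G B.
have -> : G = 1 - B by rewrite -tot addrK.
by rewrite lerD2l lerN2 HB gerBl B0.
Qed.

End Final.

Import numFieldNormedType.Exports.
Local Open Scope classical_set_scope.
Local Open Scope ring_scope.

Theorem lemma2 (R : realType) (chi tau : nat)
  (e : forall n : nat, rel 'I_n) (Sigma : forall n : nat, {set 'I_n}) :
  (0 < chi)%N -> (0 < tau)%N ->
  (forall n, symmetric (e n) /\ irreflexive (e n)) ->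
  (((n - #|Sigma n|)%N%:R / n%:R : R) @[n --> \oo] --> 0) ->
  (forall n (u v : 'I_n), u \in Sigma n -> v \in Sigma n ->
     exists s : seq 'I_n,
       [/\ path (low_edge (e n) tau) u s, last u s = v & (size s <= chi)%N]) ->
  exists g : nat -> nat,
    (((g n)%:R / n%:R : R) @[n --> \oo] --> 0) /\
    ((pp_prob R (e n)
          (Num.truncn (6 * tau%:R * (chi%:R + ln (n%:R : R)) : R))
          (fun S => (n - g n <= #|S|)%N)) @[n --> \oo] --> (1 : R)).
Proof.
move=> chi0 tau0 he hS hpath.
pose T (n : nat) := Num.truncn (6 * tau%:R * (chi%:R + ln (n%:R : R)) : R).
pose K (n : nat) : R := chi%:R * tau%:R / (T n)%:R.
pose d (n : nat) : R := (n - #|Sigma n|)%N%:R / n%:R.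
pose eta (n : nat) : R := K n + (d n + d n).
pose g (n : nat) := Num.truncn (n%:R * Num.sqrt (eta n)).
have K0 : forall n, 0 <= K n by move=> n; rewrite /K divr_ge0 // mulr_ge0.
have d0 : forall n, 0 <= d n by move=> n; rewrite /d divr_ge0.
have eta0 : forall n, 0 <= eta n.
  by move=> n; rewrite /eta; apply: addr_ge0 => //; apply: addr_ge0.
have Tbig : forall n, (0 < n)%N -> ln (n%:R : R) + 5 <= (T n)%:R.
  move=> n n0; have ln0 : 0 <= ln (n%:R : R) by apply: ln_ge0; rewrite ler1n.
  have := truncnS_gt (6 * tau%:R * (chi%:R + ln (n%:R : R)) : R).
  rewrite -/(T n) -natr1.
  have ht : 1 <= (tau%:R : R) by rewrite ler1n.
  have hc : 1 <= (chi%:R : R) by rewrite ler1n.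
  have h1 : 1 <= (tau%:R : R) * chi%:R by rewrite -natrM ler1n muln_gt0 tau0 chi0.
  have h2 : ln (n%:R : R) <= tau%:R * ln (n%:R : R) by rewrite ler_peMl.
  rewrite mulrDr; lra.
have Tpos : forall n, (0 < n)%N -> (0 < T n)%N.
  move=> n n0; have := Tbig n n0.
  have ln0 : 0 <= ln (n%:R : R) by apply: ln_ge0; rewrite ler1n.
  rewrite -(ltr0n R); lra.
have cK : K n @[n --> \oo] --> 0.
  apply/cvgrPdist_le => eps eps0.
  exists (Num.truncn (expR (chi%:R * tau%:R / eps))).+1 => // n /= hn.
  have n0 : (0 < n)%N by apply: leq_trans hn.
  have hn' : expR (chi%:R * tau%:R / eps) < n%:R.
    by apply: (lt_le_trans (truncnS_gt _)); rewrite ler_nat.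
  have hln : chi%:R * tau%:R / eps <= ln (n%:R : R).
    rewrite -[X in X <= _]expRK ler_ln ?posrE ?expR_gt0 ?ltr0n //; exact: ltW.
  have := Tbig n n0; rewrite sub0r normrN ger0_norm //.
  rewrite /K ler_pdivrMr ?ltr0n ?Tpos //.
  rewrite ler_pdivrMr // in hln.
  have ln0 : 0 <= ln (n%:R : R) by apply: ln_ge0; rewrite ler1n.
  move=> hT.
  have h : ln (n%:R : R) * eps <= (T n)%:R * eps by rewrite ler_pM2r //; lra.
  lra.
have ce : eta n @[n --> \oo] --> 0.
  by have := cvgD cK (cvgD hS hS); rewrite !addr0; apply.
have csq : Num.sqrt (eta n) @[n --> \oo] --> 0.
  by have := continuous_cvg _ (@sqrt_continuous R 0) ce; rewrite sqrtr0; apply.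
exists g; split.
  apply: (@squeeze_cvgr _ _ _ _ (fun _ => 0) (fun n => Num.sqrt (eta n))); last first.
  - exact: csq.
  - exact: cvg_cst.
  exists 1%N => // n /= n0.
  have nR : 0 < (n%:R : R) by rewrite ltr0n.
  apply/andP; split; first by rewrite divr_ge0.
  rewrite ler_pdivrMr //.
  have := truncn_itv (mulr_ge0 (ltW nR) (sqrtr_ge0 (eta n))).
  by move=> /andP [h _]; rewrite mulrC.
apply: (@squeeze_cvgr _ _ _ _ (fun n => 1 - Num.sqrt (eta n)) (fun _ => 1)); last first.
- exact: cvg_cst.
- by have := cvgB (cvg_cst (1 : R)) csq; rewrite subr0; apply.
exists 1%N => // n /= n0.
have nR : 0 < (n%:R : R) by rewrite ltr0n.
have [hesym _] := he n.
have [lo hi] := andP (prob_good R (e n) (T n) (g n) n0).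
rewrite hi andbT; apply: le_trans lo.
have EU := EU_bound R hesym tau0 (hpath n) n0 (Tpos n n0).
have hEq : n%:R * (chi%:R * tau%:R / (T n)%:R) + 2 * (n - #|Sigma n|)%N%:R = n%:R * eta n :> R.
  have nn0 : (n%:R : R) != 0 by rewrite pnatr_eq0 -lt0n.
  rewrite /eta /d /K mulrDr; congr (_ + _).
  rewrite mulrDr mulrCA divff // mulr1; lra.
rewrite hEq in EU.
rewrite lerD2l lerN2 ler_pdivrMr ?ltr0n //.
apply: le_trans EU _.
have hs := sqr_sqrtr (eta0 n).
have hg : n%:R * Num.sqrt (eta n) < (g n).+1%:R := truncnS_gt _.
rewrite -{1}hs expr2 mulrA [X in _ <= X]mulrC; apply: ler_wpM2r.
  exact: sqrtr_ge0.
exact: ltW.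
Qed.
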